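(* Let $\Gamma$ be a finite directed graph. The map $\pi\circ\zeta:Y(U(1),\Gamma)\to H^1(\Gamma;\mathbb{R})$ takes values in $\mathcal{Z}_-(\Gamma)$, and $\pi\circ\zeta:Y(U(1),\Gamma)\to\mathcal{Z}_-(\Gamma)$ is a homotopy equivalence: it induces a bijection $\pi_0(Y(U(1),\Gamma))\to\mathcal{Z}_-(\Gamma)$, and each connected component of $Y(U(1),\Gamma)$ is contractible.
   Context: $\Gamma=(V,A,h,t)$ is a finite directed graph. An oriented cycle is a set $\{(a_1,\epsilon_1),\ldots,(a_k,\epsilon_k)\}\subset A\times\{\pm1\}$ such that, writing $h(-a)=t(a)$ and $t(-a)=h(a)$, we have $h(\epsilon_ia_i)=t(\epsilon_{i+1}a_{i+1})$ for $i<k$ and $h(\epsilon_ka_k)=t(\epsilon_1a_1)$, the vertices $h(\epsilon_ia_i)$ are distinct, and $a_1\ne a_2$ if $k=2$. For a group $G$, $Y(G,\Gamma)$ is the space of maps $\lambda:A\to G\setminus\{\mathrm{id}\}$ such that $\lambda(a_1)^{\epsilon_1}\cdots\lambda(a_k)^{\epsilon_k}=\mathrm{id}$ for every oriented cycle. Let $C^1(\Gamma;\mathbb{R})=\mathbb{R}^A$ be the cellular 1-cochains and $\pi:C^1(\Gamma;\mathbb{R})\to H^1(\Gamma;\mathbb{R})$ the natural surjection (dual to the inclusion $H_1(\Gamma;\mathbb{R})\hookrightarrow C_1(\Gamma;\mathbb{R})$). Let $\arg:U(1)\setminus\{1\}\to(0,1)$ be the normalized argument ($\arg(e^{2\pi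 i s})=s$ for $s\in(0,1)$), and $\zeta:Y(U(1),\Gamma)\to C^1(\Gamma;\mathbb{R})$, $\zeta(\lambda)(a)=\arg(\lambda(a))$. $\mathcal{Z}_-(\Gamma)$ is the set of points of the lattice $H^1(\Gamma;\mathbb{Z})$ lying in the interior of the zonotope $\pi([0,1]^A)\subset H^1(\Gamma;\mathbb{R})$ (equivalently, $\mathcal{Z}_-(\Gamma)=\pi((0,1)^A)\cap H^1(\Gamma;\mathbb{Z})$). *)

(* Defs.v *)
From HB Require Import structures.
From mathcomp Require Import all_boot all_order all_algebra.
From mathcomp Require Import all_classical all_reals all_analysis.
From mathcomp Require Import complex.
Import numFieldTopology.Exports numFieldNormedType.Exports.

Set Implicit Arguments.
Unset Strict Implicit.
Unset Printing Implicit Defensive.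

Import Order.TTheory GRing.Theory Num.Theory.
Local Open Scope classical_set_scope.
Local Open Scope ring_scope.

(* The complex numbers R[i] (R a real field) with their usual metric topology
   (the one induced by the complex modulus). *)
HB.instance Definition _ (R : realType) :=
  PseudoPointedMetric.copy R[i] (R[i] : numFieldType)^o.

(* An oriented arrow (a, e) with e : bool encodes e*a where true = +1 and    *)
(* false = -1; h(-a) = t(a), t(-a) = h(a).                                  *)
Section Graph.
Variables (V A : finType) (hd tl : A -> V).

Definition ohead (p : A * bool) : V := if p.2 then hd p.1 else tl p.1.
Definition otail (p : A * bool) : V := if p.2 then tl p.1 else hd p.1.

Definition oriented_cycle (c : seq (A * bool)) : Prop :=
  [/\ c <> [::],
      cycle (fun p q => ohead p == otail q) c,
      uniq (map ohead c)
    & (match c with [:: p; q] => p.1 <> q.1 | _ => True end)].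

End Graph.

Section U1.
Variable R : realType.
Local Open Scope complex_scope.

Definition U1_minus_1 (z : R[i]) : Prop := `|z| = 1 /\ z <> 1.

Definition opow (z : R[i]) (e : bool) : R[i] := if e then z else z^-1.

Definition nargC (z : R[i]) : R :=
  xget 0 [set s : R | 0 < s < 1 /\
          z = (cos (2 * pi * s)) +i* (sin (2 * pi * s))].

Variables (V A : finType) (hd tl : A -> V).

Definition YU1 : set {ptws A -> R[i]} :=
  [set lam | (forall a, U1_minus_1 (lam a)) /\
     (forall c, oriented_cycle hd tl c ->
        \prod_(p <- c) opow (lam p.1) p.2 = 1)].

Definition zeta (lam : A -> R[i]) : A -> R := fun a => nargC (lam a).

(* cellular 1-chains and 1-cycles: H_1(Gamma;R) = Z_1 = ker (boundary) *)
Definition boundary (z : A -> R) (v : V) : R :=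
  \sum_(a | hd a == v) z a - \sum_(a | tl a == v) z a.
Definition is_cycle (z : A -> R) : Prop := forall v, boundary z v = 0.
Definition H1R := {z : A -> R | is_cycle z}.

(* H^1(Gamma;R) = Hom(H_1(Gamma;R), R); pi : C^1 -> H^1 is the dual of the
   inclusion H_1 -> C_1, i.e. restriction of the cochain to cycles. *)
Definition H1coR := H1R -> R.
Definition piH1 (x : A -> R) : H1coR := fun z => \sum_a x a * sval z a.

Definition H1Z : set H1coR :=
  [set p | exists n : A -> int, p = piH1 (fun a => (n a)%:~R)].

Definition Zminus : set H1coR :=
  [set p | (exists x : A -> R, (forall a, 0 < x a < 1) /\ p = piH1 x) /\ H1Z p].

End U1.

Definition contractible (R : realType) (T : topologicalType) (C : set T) : Prop :=
  exists x0 : T, C x0 /\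
  exists H : (R * T)%type -> T,
    [/\ {within `[0%R, 1%R] `*` C, continuous H},
        (forall s x, 0 <= s <= 1 -> C x -> C (H (s, x))),
        (forall x, C x -> H (0, x) = x)
      & (forall x, C x -> H (1, x) = x0)].

Arguments YU1 R {V A} hd tl _.
Arguments zeta R {A} lam _.
Arguments piH1 R {V A} hd tl x _.
Arguments Zminus R {V A} hd tl _.
Arguments H1Z R {V A} hd tl _.

(* Main.v *)
Require Import Defs.
From HB Require Import structures.
From mathcomp Require Import all_boot all_order all_algebra.
From mathcomp Require Import all_classical all_reals all_analysis.
From mathcomp Require Import complex.
From mathcomp Require Import ring lra.
Import numFieldTopology.Exports numFieldNormedType.Exports.
Import Order.TTheory GRing.Theory Num.Theory.
Set Implicit Arguments.
Unset Strict Implicit.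
Unset Printing Implicit Defensive.
Local Open Scope classical_set_scope.
Local Open Scope ring_scope.
Section Trig.
Variable R : realType.
Local Open Scope complex_scope.

Definition ex (s : R) : R[i] := (cos (2 * pi * s)) +i* (sin (2 * pi * s)).
Definition gfun (z : R[i]) : R := 2^-1 - atan (complex.Im z / (1 - complex.Re z)) / pi.

Lemma pi_neq0 : (pi : R) != 0. Proof. by rewrite gt_eqF // pi_gt0. Qed.

Lemma cos2x (y : R) : cos (2 * y) = 1 - 2 * sin y ^+ 2.
Proof. have -> : 2 * y = y + y by ring. rewrite cosD -!expr2 cos2sin2. ring. Qed.

Lemma sin2x (y : R) : sin (2 * y) = 2 * sin y * cos y.
Proof. have -> : 2 * y = y + y by ring. rewrite sinD. ring. Qed.

Lemma ex_norm s : `|ex s| = 1.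
Proof. by rewrite normc_def /= cos2Dsin2 sqrtr1. Qed.

Lemma g_ex s : 0 < s < 1 -> gfun (ex s) = s.
Proof.
move=> /andP[s0 s1]; rewrite /gfun /ex /=.
set y := pi * s.
have y0 : 0 < y by rewrite mulr_gt0 // pi_gt0.
have ypi : y < pi by rewrite /y -[X in _ < X]mulr1 ltr_pM2l // pi_gt0.
have sy : 0 < sin y by apply: sin_gt0_pi; rewrite y0 ypi.
have -> : 2 * pi * s = 2 * y by rewrite /y mulrA.
rewrite cos2x sin2x.
have -> : 2 * sin y * cos y / (1 - (1 - 2 * sin y ^+ 2)) = tan (pi / 2 - y).
  have -> : pi / 2 - y = -(y - pi / 2) by ring.
  rewrite /tan sinN cosN sinBpihalf cosBpihalf opprK.
  field; have h : 0 < sin y ^+ 2 by rewrite exprn_gt0.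
  by apply/andP; split; rewrite gt_eqF //; lra.
rewrite (@tanK R); last first.
  rewrite in_itv /=; apply/andP; split.
    have := pi_gt0 R; lra.
  lra.
rewrite /y mulrBl [pi * s]mulrC mulfK ?pi_neq0 // mulrAC divff ?pi_neq0 // mul1r; lra.
Qed.

Lemma norm_ab (a b : R) : `|a +i* b| = 1 -> a ^+ 2 + b ^+ 2 = 1.
Proof.
rewrite normc_def /= => -[] h.
have h0 : 0 <= a ^+ 2 + b ^+ 2 by rewrite addr_ge0 // sqr_ge0.
by rewrite -(sqr_sqrtr h0) h expr1n.
Qed.

Lemma U1_Re_lt1 (a b : R) : U1_minus_1 (a +i* b) -> a < 1 /\ a ^+ 2 + b ^+ 2 = 1.
Proof.
move=> [/norm_ab h hne]; split => //.
rewrite ltNge; apply/negP => a1; apply: hne.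
have hb : b ^+ 2 = 0 by have := sqr_ge0 b; nra.
have b0 : b = 0 by apply/eqP; rewrite -sqrf_eq0 hb.
have a1' : a = 1 by rewrite b0 in h; nra.
by rewrite a1' b0.
Qed.

Lemma ex_g z : U1_minus_1 z -> ex (gfun z) = z /\ 0 < gfun z < 1.
Proof.
case: z => a b /U1_Re_lt1 [a1 hab].
rewrite /gfun /ex /=.
set u := b / (1 - a); set t := atan u.
have tb := atan_gtNpi2 u; have tb' := atan_ltpi2 u.
have pi0 := pi_gt0 R.
have hc : 0 < cos t by apply: cos_gt0_pihalf; rewrite tb tb'.
have htan : tan t = u by rewrite /t atanK.
have hsin : sin t = u * cos t.
  by rewrite -htan /tan divfK // gt_eqF.
have hb2 : b ^+ 2 = 1 - a ^+ 2 by lra.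
have a10 : 1 - a != 0 by rewrite gt_eqF // subr_gt0.
have hu2 : 1 + u ^+ 2 = 2 / (1 - a).
  by rewrite /u expr_div_n hb2; field.
have hc2 : cos t ^+ 2 = (1 - a) / 2.
  have := cos2_tan2 (negbT (gt_eqF hc)); rewrite htan hu2 => h.
  by rewrite -[LHS]invrK h invf_div.
have -> : 2 * pi * (2^-1 - t / pi) = pi - 2 * t.
  rewrite mulrBr; congr (_ - _).
    by field.
  by rewrite [t / pi]mulrC mulrA mulfK ?pi_neq0.
rewrite cosB sinB cospi sinpi cos2x sin2x.
split.
  congr (_ +i* _).
    rewrite !mul0r addr0 mulN1r opprB hsin exprMn hc2 /u expr_div_n hb2. field. done.
  rewrite mul0r sub0r mulN1r opprK hsin -!mulrA -expr2 hc2 /u. field. done.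
have hq : pi * pi^-1 = 1 :> R by rewrite divff ?pi_neq0.
have q0 : 0 < pi^-1 :> R by rewrite invr_gt0.
have tl : - (pi / 2) < t by [].
have tr : t < pi / 2 by [].
rewrite -subr_gt0 in tr; rewrite -subr_gt0 in tl.
have k1 := mulr_gt0 (tr : 0 < pi / 2 - t) q0.
have k2 := mulr_gt0 (tl : 0 < t - - (pi / 2)) q0.
have e1 : pi / 2 * pi^-1 = 2^-1 :> R by rewrite mulrAC hq mul1r.
rewrite mulrBl e1 in k1; rewrite opprK mulrDl e1 in k2.
apply/andP; split; lra.
Qed.

Lemma exD x y : ex (x + y) = ex x * ex y.
Proof.
rewrite /ex !mulrDr cosD sinD; apply/eqP; rewrite eq_complex /=.
by apply/andP; split; apply/eqP; ring.
Qed.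

Lemma ex0 : ex 0 = 1.
Proof. by rewrite /ex mulr0 cos0 sin0. Qed.

Lemma ex_neq0 x : ex x != 0.
Proof. by apply/eqP => h; have := ex_norm x; rewrite h normr0 => /eqP; rewrite eq_sym oner_eq0. Qed.

Lemma exN x : ex (- x) = (ex x)^-1.
Proof.
apply: (mulfI (ex_neq0 x)); rewrite -exD subrr ex0 divff //; exact: ex_neq0.
Qed.

Lemma ex1 : ex 1 = 1.
Proof. by rewrite /ex mulr1 mulr_natl cos2pi sin2pi. Qed.

Lemma ex_nat n : ex n%:R = 1.
Proof. by elim: n => [|n IH]; rewrite ?ex0 // -addn1 natrD exD IH ex1 mulr1. Qed.

Lemma ex_int (k : int) : ex k%:~R = 1.
Proof.
case: k => n; first by rewrite ex_nat.
by rewrite NegzE mulrNz exN ex_nat invr1.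
Qed.

Lemma ex_U1 s : 0 < s < 1 -> U1_minus_1 (ex s).
Proof.
move=> hs; split; first exact: ex_norm.
move=> h; have := g_ex hs; rewrite h /gfun /= subrr mul0r atan0 mul0r subr0 => hs2.
move: h; rewrite -hs2 /ex => -[] h _; move: h.

have -> : 2 * pi / 2 = pi :> R by field.
rewrite cospi => /eqP; rewrite -subr_eq0 -opprD oppr_eq0 -mulr2n pnatr_eq0 //.
Qed.

Definition isint (r : R) := exists k : int, r = k%:~R.

Lemma ex_eq1 t : ex t = 1 -> isint t.
Proof.
move=> h; exists (Num.floor t).
have := floor_itv t; set k := Num.floor t => /andP[h1 h2].
have : ex (t - k%:~R) = 1 by rewrite exD exN ex_int invr1 mulr1.
have [/eqP e|ne] := eqVneq (t - k%:~R) 0; first by move=> _; apply/eqP; rewrite -subr_eq0.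
move=> e1; exfalso.
have hs : 0 < t - k%:~R < 1.
  rewrite lt_neqAle eq_sym ne subr_ge0 h1 /=.
  by rewrite ltrBlDl; move: h2; rewrite intrD.
by have [_] := ex_U1 hs; apply.
Qed.

Lemma nargC_U1 z : U1_minus_1 z -> nargC z = gfun z.
Proof.
move=> hz; have [e hg] := ex_g hz.
rewrite /nargC; case: xgetP => [s _ [hs ->]| /(_ (gfun z))]; last first.
  by move=> h; exfalso; apply: h; split.
by rewrite g_ex.
Qed.

Lemma nargC_ex s : 0 < s < 1 -> nargC (ex s) = s.
Proof. by move=> hs; rewrite nargC_U1 ?g_ex //; exact: ex_U1. Qed.

Lemma ex_nargC z : U1_minus_1 z -> ex (nargC z) = z /\ 0 < nargC z < 1.
Proof. by move=> hz; rewrite nargC_U1 //; exact: ex_g. Qed.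
End Trig.

Section Graph.
Variable R : realType.
Variables (V A : finType) (hd tl : A -> V).

Local Notation oh := (Defs.ohead hd tl).
Local Notation ot := (Defs.otail hd tl).
Definition sgn (e : bool) : R := if e then 1 else -1.
Definition cyc_sum (x : A -> R) (c : seq (A * bool)) : R :=
  \sum_(p <- c) sgn p.2 * x p.1.
Definition chainc (c : seq (A * bool)) : A -> R :=
  fun a => \sum_(p <- c) (p.1 == a)%:R * sgn p.2.
Definition hyp (x : A -> R) := forall c, oriented_cycle hd tl c -> isint (cyc_sum x c).

Lemma isint_int (k : int) : isint (k%:~R : R). Proof. by exists k. Qed.
Lemma isintD (x y : R) : isint x -> isint y -> isint (x + y).
Proof. by move=> [k ->] [l ->]; exists (k + l); rewrite intrD. Qed.
Lemma isintN (x : R) : isint x -> isint (- x).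
Proof. by move=> [k ->]; exists (- k); rewrite mulrNz. Qed.
Lemma isintB (x y : R) : isint x -> isint y -> isint (x - y).
Proof. by move=> ? ?; apply: isintD => //; apply: isintN. Qed.
Lemma isint0 : isint (0 : R). Proof. by exists 0. Qed.
Lemma isint_sgn e (x : R) : isint x -> isint (sgn e * x).
Proof. by case: e; rewrite /sgn ?mul1r ?mulN1r //; apply: isintN. Qed.
Lemma isint_sum (I : eqType) (s : seq I) (F : I -> R) :
  (forall i, i \in s -> isint (F i)) -> isint (\sum_(i <- s) F i).
Proof.
elim: s => [|i s IH] h; first by rewrite big_nil; exact: isint0.
rewrite big_cons; apply: isintD; first by apply: h; rewrite mem_head.
by apply: IH => j js; apply: h; rewrite in_cons js orbT.
Qed.

Lemma cyc_sum_chain x c : cyc_sum x c = \sum_a x a * chainc c a.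
Proof.
rewrite /cyc_sum /chainc.
under [RHS]eq_bigr => a _ do rewrite big_distrr /=.
rewrite exchange_big /=; apply: eq_bigr => p _.
rewrite (bigD1 p.1) //= eqxx mul1r big1 ?addr0; first by rewrite mulrC.
move=> a /negPf.
by rewrite eq_sym => ->; rewrite mul0r mulr0.
Qed.

Definition E (p q : A * bool) := oh p == ot q.

Lemma path_tele (F : V -> R) x0 q : path E x0 q ->
  \sum_(p <- q) (F (oh p) - F (ot p)) =
  F (oh (last x0 q)) - F (oh x0).
Proof.
elim: q x0 => [|y q IH] x0 /=; first by rewrite big_nil subrr.
move=> /andP[/eqP e pq]; rewrite big_cons (IH y) // e; ring.
Qed.

Lemma sgn_diff (F : V -> R) p :
  sgn p.2 * (F (hd p.1) - F (tl p.1)) = F (oh p) - F (ot p).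
Proof. by case: p => a [] /=; rewrite /sgn ?mul1r // mulN1r opprB. Qed.


Lemma sum_chain_pred (P : pred A) c :
  \sum_(a | P a) chainc c a = \sum_(p <- c) (P p.1)%:R * sgn p.2.
Proof.
rewrite /chainc (exchange_big_dep predT) //=; apply: eq_bigr => p _.
rewrite big_mkcond /= (bigD1 p.1) //= eqxx mul1r big1 ?addr0.
  by case: (P p.1); rewrite ?mul1r ?mul0r.
by move=> a /negPf; rewrite eq_sym => ->; rewrite mul0r; case: (P a).
Qed.

Lemma cycle_chain c : cycle E c -> forall v, boundary hd tl (chainc c) v = 0.
Proof.
move=> hc v; rewrite /boundary !sum_chain_pred -sumrB.
under eq_bigr => p _ do rewrite -mulrBl mulrC (sgn_diff (fun w => (w == v)%:R)).
case: c hc => [|x0 s] hc; first by rewrite big_nil.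
rewrite /= in hc; have := path_tele (fun w => (w == v)%:R) hc.
rewrite big_rcons last_rcons /= subrr => h.
by rewrite big_cons addrC.
Qed.

Definition cyc_of c (hc : cycle E c) : H1R R hd tl := exist _ (chainc c) (cycle_chain hc).

Lemma cyc_sum_pi x c (hc : cycle E c) : cyc_sum x c = piH1 R hd tl x (cyc_of hc).
Proof. by rewrite cyc_sum_chain /piH1. Qed.

Lemma piH1_cobound (f : V -> R) : piH1 R hd tl (fun a => f (hd a) - f (tl a)) = fun _ => 0.
Proof.
apply: funext => -[z hz] /=; rewrite /piH1 /=.
under eq_bigr => a _ do rewrite mulrBl.
rewrite sumrB.
rewrite (partition_big hd predT) //= (partition_big tl predT (P := predT)) //=.
rewrite -sumrB big1 // => w _.
rewrite (eq_bigr (fun i => f w * z i)); last by move=> i /eqP ->.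
rewrite [X in _ - X](eq_bigr (fun i => f w * z i)); last by move=> i /eqP ->.
by rewrite -!mulr_sumr -mulrBr; have := hz w; rewrite /boundary => ->; rewrite mulr0.
Qed.

Definition Fpot (M : V -> A -> R) (x : A -> R) (v : V) := \sum_b M v b * x b.

Section Walk.
Variable s : seq A.
Definition er : rel V := fun u w =>
  has (fun b => ((hd b == u) && (tl b == w)) || ((tl b == u) && (hd b == w))) s.

Lemma er_sym : symmetric er.
Proof.
move=> u w; apply/hasP/hasP => -[b bs h]; exists b => //;
  by case/orP: h => /andP[-> ->]; rewrite ?orbT.
Qed.

Lemma walk u p : path er u p -> exists q : seq (A * bool),
  [/\ all (fun r => r.1 \in s) q, map oh q = p &
      forall x0, oh x0 = u -> path E x0 q /\ oh (last x0 q) = last u p].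
Proof.
elim: p u => [|w p IH] u /=.
  by move=> _; exists [::]; split => // x0 ->.
move=> /andP[/hasP [b bs hb] pp]; have [q [hq1 hq2 hq3]] := IH w pp.
have [e [he1 he2]] : exists e : bool, oh (b, e) = w /\ ot (b, e) = u.
  by case/orP: hb => /andP[/eqP h1 /eqP h2]; [exists false | exists true].
exists ((b, e) :: q); split => /=; first by rewrite bs.
  by rewrite he1 hq2.
move=> x0 hx0; have [h1 h2] := hq3 (b, e) he1.
by rewrite /E hx0 he2 eqxx h1 h2.
Qed.
End Walk.

Lemma potential (s : seq A) : exists M : V -> A -> R, forall x, hyp x ->
  forall a, a \in s -> isint (x a - (Fpot M x (hd a) - Fpot M x (tl a))).
Proof.
elim: s => [|a s [M IH]]; first by exists (fun _ _ => 0) => x _ a.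
have [as_|anin] := boolP (a \in s).
  by exists M => x hx b; rewrite in_cons => /orP[/eqP ->|]; apply: IH.
have [conn|nconn] := boolP (connect (er s) (hd a) (tl a)).
  exists M => x hx b; rewrite in_cons => /orP[/eqP ->|]; last by apply: IH.
  case/connectP: conn => p0 hp0 e0.
  move: e0; case: (shortenP hp0) => p hp up _ ep.
  have [q [hq1 hq2 hq3]] := walk hp.
  have [hq4 hq5] := hq3 (a, true) erefl.
  have hcyc : oriented_cycle hd tl ((a, true) :: q).
    split => //.
    - rewrite /= rcons_path hq4 /= /E hq5 -ep; exact: eqxx.
    - by rewrite /= hq2.
    - case: q hq1 {hq2 hq3 hq4 hq5} => [|r [|r' q]] //= /andP[rs _].
      by move=> ear; move: rs; rewrite -ear (negPf anin).
  have := hx _ hcyc; rewrite /cyc_sum big_cons /= /sgn mul1r.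
  set F := Fpot M x.
  have -> : \sum_(p <- q) (if p.2 then 1 else -1) * x p.1 =
     \sum_(p <- q) (F (oh p) - F (ot p)) +
     \sum_(p <- q) sgn p.2 * (x p.1 - (F (hd p.1) - F (tl p.1))).
    rewrite -big_split /=; apply: eq_bigr => r _.
    by rewrite -(sgn_diff F r) -mulrDr addrC subrK.
  rewrite (path_tele F hq4) hq5 ep /= => h.
  have : isint (\sum_(p <- q) sgn p.2 * (x p.1 - (F (hd p.1) - F (tl p.1)))).
    apply: isint_sum => r rq; apply: isint_sgn; apply: IH => //.
    by move/allP: hq1 => /(_ r rq).
  move=> /(isintB h); congr isint; ring.
pose K v := (connect (er s) (hd a) v : bool).
exists (fun v b => M v b + (K v)%:R * ((b == a)%:R - M (hd a) b + M (tl a) b)).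
move=> x hx b.
have hF : forall v, Fpot (fun v b => M v b + (K v)%:R * ((b == a)%:R - M (hd a) b + M (tl a) b)) x v =
   Fpot M x v + (K v)%:R * (x a - Fpot M x (hd a) + Fpot M x (tl a)).
  move=> v; rewrite /Fpot.
  under eq_bigr => c _ do rewrite mulrDl.
  rewrite big_split /=; congr (_ + _).
  under eq_bigr => c _ do rewrite -mulrA.
  rewrite -mulr_sumr; congr (_ * _).
  rewrite (eq_bigr (fun i => (i == a)%:R * x i - M (hd a) i * x i + M (tl a) i * x i)); last by move=> i _; ring.
  rewrite !big_split /= sumrN; congr (_ - _ + _).
  by rewrite (bigD1 a) //= eqxx mul1r big1 ?addr0 // => c /negPf ->; rewrite mul0r.
rewrite in_cons => /orP[/eqP ->|bs].
  rewrite !hF /K connect0 (negPf nconn) /=.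
  have -> : x a - (Fpot M x (hd a) + 1 * (x a - Fpot M x (hd a) + Fpot M x (tl a)) -
      (Fpot M x (tl a) + 0 * (x a - Fpot M x (hd a) + Fpot M x (tl a)))) = 0 by ring.
  exact: isint0.
have ee : K (hd b) = K (tl b).
  have hbe : er s (hd b) (tl b) by apply/hasP; exists b => //; rewrite !eqxx.
  rewrite /K; apply/idP/idP => h.
    by apply: connect_trans h (connect1 hbe).
  apply: connect_trans h _; apply: connect1; by rewrite er_sym.
rewrite !hF ee.
have -> : x b - (Fpot M x (hd b) + (K (tl b))%:R * (x a - Fpot M x (hd a) + Fpot M x (tl a)) -
    (Fpot M x (tl b) + (K (tl b))%:R * (x a - Fpot M x (hd a) + Fpot M x (tl a)))) =
    x b - (Fpot M x (hd b) - Fpot M x (tl b)) by ring.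
exact: IH.
Qed.

Lemma piH1_lin x y : piH1 R hd tl (fun a => x a + y a) =
  fun z => piH1 R hd tl x z + piH1 R hd tl y z.
Proof.
apply: funext => z; rewrite /piH1 -big_split /=; apply: eq_bigr => a _; ring.
Qed.

Lemma hyp_H1Z x : hyp x -> H1Z R hd tl (piH1 R hd tl x).
Proof.
move=> hx; have [M hM] := potential (enum A).
have h a : isint (x a - (Fpot M x (hd a) - Fpot M x (tl a))).
  by apply: hM => //; rewrite mem_enum.
pose n := fun a => projT1 (cid (h a)).
exists n.
transitivity (piH1 R hd tl (fun a => (n a)%:~R + (Fpot M x (hd a) - Fpot M x (tl a)))).
  congr piH1; apply: funext => a; rewrite /n; case: (cid (h a)) => k /= <-; ring.
rewrite piH1_lin piH1_cobound; apply: funext => z; by rewrite addr0.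
Qed.

Lemma H1Z_hyp x : H1Z R hd tl (piH1 R hd tl x) -> hyp x.
Proof.
move=> [n hn] c [_ hc _ _].
have hc' : cycle E c by exact: hc.
rewrite (cyc_sum_pi x hc') hn -(cyc_sum_pi _ hc').
apply: isint_sum => p _; apply: isint_sgn; exact: isint_int.
Qed.

Lemma prod_opow (lam : A -> R[i]) x c : (forall a, lam a = ex (x a)) ->
  \prod_(p <- c) opow (lam p.1) p.2 = ex (cyc_sum x c).
Proof.
move=> hl; rewrite /cyc_sum; elim: c => [|p c IH]; first by rewrite !big_nil ex0.
rewrite !big_cons IH exD hl; congr (_ * _).
by case: p => a [] /=; rewrite /sgn ?mul1r // mulN1r exN.
Qed.

Lemma Y_hyp (lam : {ptws A -> R[i]}) : YU1 R hd tl lam -> hyp (zeta R lam).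
Proof.
move=> [hu hcyc] c hc; apply: ex_eq1.
rewrite -(prod_opow (lam := lam)); first exact: hcyc.
by move=> a; rewrite /zeta; have [-> _] := ex_nargC (hu a).
Qed.

Lemma Y_of (x : A -> R) : (forall a, 0 < x a < 1) -> hyp x ->
  YU1 R hd tl (fun a => ex (x a) : R[i]).
Proof.
move=> h01 hx; split; first by move=> a; apply: ex_U1.
move=> c hc; have := @prod_opow (fun a => ex (x a)) x c (fun a => erefl) => /= ->.
by have [k ->] := hx c hc; exact: ex_int.
Qed.

Lemma zeta_ex (x : A -> R) : (forall a, 0 < x a < 1) -> zeta R (fun a => ex (x a)) = x.
Proof. by move=> h; apply: funext => a; rewrite /zeta nargC_ex. Qed.
End Graph.

Section Top.
Variable R : realType.
Local Notation C := ((R[i] : numFieldType)^o).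
Local Open Scope complex_scope.

Lemma ReB (u w : R[i]) : complex.Re (u - w) = complex.Re u - complex.Re w.
Proof. by case: u w => [a b] [c d]. Qed.
Lemma ImB (u w : R[i]) : complex.Im (u - w) = complex.Im u - complex.Im w.
Proof. by case: u w => [a b] [c d]. Qed.

Lemma abs_le_sqrt (a b : R) : `|a| <= Num.sqrt (a ^+ 2 + b ^+ 2).
Proof. by rewrite -sqrtr_sqr ler_sqrt ?addr_ge0 ?sqr_ge0 // lerDl sqr_ge0. Qed.

Lemma sqrt_le_abs (a b : R) : Num.sqrt (a ^+ 2 + b ^+ 2) <= `|a| + `|b|.
Proof.
have h : a ^+ 2 + b ^+ 2 <= (`|a| + `|b|) ^+ 2.
  rewrite sqrrD (real_normK (num_real a)) (real_normK (num_real b)).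
  have := mulr_ge0 (normr_ge0 a) (normr_ge0 b); rewrite -mulr_natr; lra.
apply: le_trans (_ : _ <= Num.sqrt ((`|a| + `|b|) ^+ 2)) _.
  by rewrite ler_sqrt // sqr_ge0.
by rewrite sqrtr_sqr ger0_norm // addr_ge0.
Qed.

Lemma ltC (w : R[i]) (e : R) : (`|w| < e%:C) = (Num.sqrt (complex.Re w ^+ 2 + complex.Im w ^+ 2) < e).
Proof. by rewrite normc_def ltcR. Qed.

Lemma cvg_Re (T : Type) (F : set_system T) {FF : Filter F} (f : T -> R[i]) (y : R[i]) :
  f @ F --> y -> (fun t => complex.Re (f t)) @ F --> complex.Re y.
Proof.
move=> /(@cvgrPdist_lt _ C) h; apply/cvgrPdist_lt => e e0.
have e0' : (0 : R[i]) < e%:C by rewrite ltcR.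
move: (h _ e0'); apply: filterS => t; rewrite ltC ReB.
by apply: le_lt_trans; apply: abs_le_sqrt.
Qed.

Lemma cvg_Im (T : Type) (F : set_system T) {FF : Filter F} (f : T -> R[i]) (y : R[i]) :
  f @ F --> y -> (fun t => complex.Im (f t)) @ F --> complex.Im y.
Proof.
move=> /(@cvgrPdist_lt _ C) h; apply/cvgrPdist_lt => e e0.
have e0' : (0 : R[i]) < e%:C by rewrite ltcR.
move: (h _ e0'); apply: filterS => t; rewrite ltC ImB addrC.
by apply: le_lt_trans; apply: abs_le_sqrt.
Qed.

Lemma cvg_C (T : Type) (F : set_system T) {FF : Filter F} (f : T -> R[i]) (y : R[i]) :
  (fun t => complex.Re (f t)) @ F --> complex.Re y ->
  (fun t => complex.Im (f t)) @ F --> complex.Im y ->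
  f @ F --> y.
Proof.
move=> /cvgrPdist_lt h1 /cvgrPdist_lt h2.
apply/(@cvgrPdist_lt _ C) => eps eps0.
have [he0 hre] : complex.Im eps = 0 /\ 0 < complex.Re eps.
  by move: eps0; rewrite ltcE /= => /andP[/eqP ? ?].
have e2 : 0 < complex.Re eps / 2 by rewrite divr_gt0.
move: (h1 _ e2) (h2 _ e2) => n1 n2.
have -> : eps = (complex.Re eps)%:C by case: eps he0 {eps0 hre e2 n1 n2} => ? ? /= ->.
move: n1 n2; apply: filterS2 => t k1 k2.
rewrite ltC ReB ImB.
apply: le_lt_trans (sqrt_le_abs _ _) _.
by rewrite [X in _ < X](splitr (complex.Re eps)) ltrD.
Qed.

Lemma cvg_R_lin (T : Type) (F : set_system T) {FF : Filter F} (f : T -> R) y (k : R) :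
  f @ F --> y -> (fun t => k * f t) @ F --> k * y.
Proof. by move=> h; apply: cvgMl_tmp. Qed.

Lemma cvg_ex (T : Type) (F : set_system T) {FF : Filter F} (f : T -> R) y :
  f @ F --> y -> (fun t => ex (f t)) @ F --> ex y.
Proof.
move=> h; apply: cvg_C => /=.
  apply: (@cvg_comp _ _ _ _ (@cos R)); first (apply: cvg_R_lin; exact: h).
  exact: continuous_cos.
apply: (@cvg_comp _ _ _ _ (@sin R)); first (apply: cvg_R_lin; exact: h).
exact: continuous_sin.
Qed.

Lemma cvg_gfun (T : Type) (F : set_system T) {FF : Filter F} (f : T -> R[i]) z :
  complex.Re z != 1 -> f @ F --> z -> (fun t => gfun (f t)) @ F --> gfun z.
Proof.
move=> hz h; rewrite /gfun.
apply: cvgB; first exact: cvg_cst.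
apply: cvgMr_tmp.
apply: (@cvg_comp _ _ _ _ (@atan R)); last exact: continuous_atan.
apply: cvgM; first exact: cvg_Im.
apply: cvgV; first by rewrite subr_eq0 eq_sym.
apply: cvgB; first exact: cvg_cst.
exact: cvg_Re.
Qed.
End Top.

Section Ptws.
Variable R : realType.
Variable A : finType.
Lemma ptws_cvg (T : Type) (F : set_system T) {FF : Filter F} (g : T -> {ptws A -> R[i]}) (f : {ptws A -> R[i]}) :
  (forall a, (fun t => g t a) @ F --> f a) -> g @ F --> f.
Proof.
move=> h.
have : (g @ F) --> (f : product_topology_def (fun _ : A => R[i])).
  apply/cvg_sup => a.
  move=> U [? /= [[W oW <-]] /= Wfa] /filterS; apply.
  apply: (h a); exact: open_nbhs_nbhs.
by [].
Qed.
Lemma ptws_proj (T : Type) (F : set_system T) {FF : Filter F} (g : T -> {ptws A -> R[i]}) (f : {ptws A -> R[i]}) a :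
  g @ F --> f -> (fun t => g t a) @ F --> f a.
Proof.
move=> h; apply: cvg_trans (@proj_continuous A (fun _ => R[i]) a f).
exact: (cvg_app (proj a) h).
Qed.
End Ptws.

Section Main.
Variable R : realType.
Variables (V A : finType) (hd tl : A -> V).
Local Notation Y := (YU1 R hd tl).
Local Notation P lam := (piH1 R hd tl (zeta R lam)).

Lemma Y_props (lam : {ptws A -> R[i]}) : Y lam -> forall a,
  U1_minus_1 (lam a) /\ lam a = ex (zeta R lam a) /\ 0 < zeta R lam a < 1.
Proof. by move=> [hu _] a; have [e h] := ex_nargC (hu a); split => //. Qed.

Definition gam (x y : A -> R) (s : R) : {ptws A -> R[i]} :=
  fun a => ex ((1 - s) * x a + s * y a).

Lemma piH1_comb x y s : piH1 R hd tl (fun a => (1 - s) * x a + s * y a) =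
  fun z => (1 - s) * piH1 R hd tl x z + s * piH1 R hd tl y z.
Proof.
apply: funext => z; rewrite /piH1 !mulr_sumr -big_split; apply: eq_bigr => a _ /=; ring.
Qed.

Lemma comb01 (x y s : R) : 0 < x < 1 -> 0 < y < 1 -> 0 <= s <= 1 ->
  0 < (1 - s) * x + s * y < 1.
Proof.
move=> /andP[x0 x1] /andP[y0 y1] /andP[s0 s1].
have hm0 : 0 < Num.min x y by rewrite lt_min x0 y0.
have hM1 : Num.max x y < 1 by rewrite gt_max x1 y1.
have t1 : 0 <= 1 - s by rewrite subr_ge0.
have m1 : 0 <= x - Num.min x y by rewrite subr_ge0 ge_min lexx.
have m2 : 0 <= y - Num.min x y by rewrite subr_ge0 ge_min lexx orbT.
have m3 : 0 <= Num.max x y - x by rewrite subr_ge0 le_max lexx.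
have m4 : 0 <= Num.max x y - y by rewrite subr_ge0 le_max lexx orbT.
have k1 := mulr_ge0 t1 m1; have k2 := mulr_ge0 s0 m2.
have k3 := mulr_ge0 t1 m3; have k4 := mulr_ge0 s0 m4.
apply/andP; split; nra.
Qed.

Lemma seg lam mu s : Y lam -> Y mu -> P lam = P mu -> 0 <= s <= 1 ->
  Y (gam (zeta R lam) (zeta R mu) s) /\ P (gam (zeta R lam) (zeta R mu) s) = P lam.
Proof.
move=> hl hm e hs.
have h01 a : 0 < (1 - s) * zeta R lam a + s * zeta R mu a < 1.
  by apply: comb01 => //; [exact: (Y_props hl a).2.2 | exact: (Y_props hm a).2.2].
have hp : piH1 R hd tl (fun a => (1 - s) * zeta R lam a + s * zeta R mu a) = P lam.
  by rewrite piH1_comb -e; apply: funext => z; ring.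
split.
  apply: Y_of => //; apply: H1Z_hyp; rewrite hp; exact: hyp_H1Z (Y_hyp hl).
by rewrite /gam zeta_ex.
Qed.

Lemma gam0 lam y : Y lam -> gam (zeta R lam) y 0 = lam.
Proof.
move=> hl; apply: funext => a; rewrite /gam subr0 mul1r mul0r addr0.
by rewrite -(Y_props hl a).2.1.
Qed.

Lemma gam1 x lam : Y lam -> gam x (zeta R lam) 1 = lam.
Proof.
move=> hl; apply: funext => a; rewrite /gam subrr mul0r add0r mul1r.
by rewrite -(Y_props hl a).2.1.
Qed.

Lemma gam_cont x y : continuous (gam x y).
Proof.
move=> s0; apply: ptws_cvg => a.
apply: (cvg_ex (f := fun s => (1 - s) * x a + s * y a)).
apply: cvgD; apply: cvgMr_tmp; last exact: cvg_id.
apply: cvgB; [exact: cvg_cst | exact: cvg_id].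
Qed.

Lemma int_gap (u w : R) : isint u -> isint w -> u < w -> u + 1 <= w.
Proof.
move=> [k ->] [l ->]; rewrite ltr_int -lezD1 => h.
by rewrite -[1]/(1%:~R : R) -intrD ler_int.
Qed.

Lemma half_not_int (u : R) : isint u -> ~ isint (u + 2^-1).
Proof.
move=> [k ->] [m e].
have e2 : (m - k)%:~R = 2^-1 :> R by rewrite intrB -e; ring.
have h1 : (0 : R) < (m - k)%:~R by rewrite e2 invr_gt0.
have h2 : ((m - k)%:~R : R) < 1 by rewrite e2 invf_lt1 // ltr1n.
rewrite ltr0z -lezD1 add0r in h1; rewrite ltrz1 in h2.
by have := le_lt_trans h1 h2; rewrite ltxx.
Qed.

Lemma Re_ne1 (z : R[i]) : U1_minus_1 z -> complex.Re z != 1.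
Proof. by case: z => a b h; have [a1 _] := U1_Re_lt1 h; rewrite /= lt_eqF. Qed.

Lemma cvg_bigsum (I : Type) (s : seq I) (T : Type) (F : set_system T) {FF : Filter F}
  (g : I -> T -> R) (y : I -> R) :
  (forall i, g i @ F --> y i) -> (fun t => \sum_(i <- s) g i t) @ F --> \sum_(i <- s) y i.
Proof.
move=> h; elim: s => [|i s IH].
  have -> : (fun t => \sum_(i <- [::]) g i t) = fun _ => 0 by apply: funext => t; rewrite big_nil.
  by rewrite big_nil; exact: cvg_cst.
have -> : (fun t => \sum_(j <- i :: s) g j t) = fun t => g i t + \sum_(j <- s) g j t.
  by apply: funext => t; rewrite big_cons.
by rewrite big_cons; apply: cvgD.
Qed.

Lemma zeta_gfun (nu : {ptws A -> R[i]}) : Y nu -> zeta R nu = fun b => gfun (nu b).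
Proof. by move=> hnu; apply: funext => b; rewrite /zeta nargC_U1 //; exact: (Y_props hnu b).1. Qed.

Lemma cc_of_eq lam mu : Y lam -> Y mu -> P lam = P mu -> connected_component Y lam mu.
Proof.
move=> hl hm e.
set g := gam (zeta R lam) (zeta R mu).
exists (g @` [set` (`[0, 1] : interval R)]).
  split.
  - by exists 0; [rewrite /= in_itv /= lexx ler01 | exact: gam0].
  - move=> _ [s hs <-]; apply: (seg hl hm e _).1.
    by move: hs; rewrite /= in_itv.
  - apply: connected_continuous_connected.
      by apply/connected_intervalP; exact: interval_is_interval.
    by apply: continuous_subspaceT; rewrite /g; exact: gam_cont.
by exists 1; [rewrite /= in_itv /= lexx ler01 | exact: gam1].
Qed.

Lemma cvg_psi (T : Type) (F : set_system T) {FF : Filter F} (h : T -> A -> R[i])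
  (nu : A -> R[i]) (c1 c2 : A -> R) a :
  (forall b, complex.Re (nu b) != 1) -> (forall b, (fun t => h t b) @ F --> nu b) ->
  (fun t => gfun (h t a) - (\sum_b c1 b * gfun (h t b) - \sum_b c2 b * gfun (h t b))) @ F -->
  (gfun (nu a) - (\sum_b c1 b * gfun (nu b) - \sum_b c2 b * gfun (nu b))).
Proof.
move=> hre hp.
apply: cvgB; first exact: (cvg_gfun (hre a) (hp a)).
apply: cvgB; apply: cvg_bigsum => b; apply: cvgMl_tmp; exact: (cvg_gfun (hre b) (hp b)).
Qed.

Lemma eq_of_cc lam mu : connected_component Y lam mu -> P lam = P mu.
Proof.
move=> [B [Bl BY cB] Bm].
have [M hM] := potential R hd tl (enum A).
pose phi (nu : {ptws A -> R[i]}) a :=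
  zeta R nu a - (Fpot M (zeta R nu) (hd a) - Fpot M (zeta R nu) (tl a)).
have hint nu : Y nu -> forall a, isint (phi nu a).
  by move=> hnu a; apply: hM; [exact: Y_hyp | rewrite mem_enum].
have ePphi nu : P nu = piH1 R hd tl (phi nu).
  transitivity (piH1 R hd tl (fun a => phi nu a +
      (Fpot M (zeta R nu) (hd a) - Fpot M (zeta R nu) (tl a)))).
    by congr piH1; apply: funext => a; rewrite /phi; ring.
  by rewrite piH1_lin piH1_cobound; apply: funext => z; rewrite addr0.
suff key : forall a, phi lam a = phi mu a.
  by rewrite !ePphi; congr piH1; apply: funext.
move=> a.
pose psi (nu : {ptws A -> R[i]}) := gfun (nu a) -
  (\sum_b M (hd a) b * gfun (nu b) - \sum_b M (tl a) b * gfun (nu b)).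
have epsi nu : Y nu -> psi nu = phi nu a.
  by move=> hnu; rewrite /phi /Fpot (zeta_gfun hnu).
have cpsi : {within B, continuous psi}.
  apply: continuous_in_subspaceT => nu /set_mem /BY hnu.
  have hre b : complex.Re (nu b) != 1 by apply: Re_ne1; exact: (Y_props hnu b).1.
  have hp b : (fun t : {ptws A -> R[i]} => t b) @ nbhs nu --> nu b.
    exact: (@ptws_proj R A _ (nbhs nu) _ id nu b cvg_id).
  exact: (@cvg_psi _ (nbhs nu) _ id nu (M (hd a)) (M (tl a)) a hre hp).
have /connected_intervalP ci := connected_continuous_connected cB cpsi.
have iB nu : B nu -> isint (psi nu) by move=> hnu; rewrite epsi; [apply: hint|]; apply: BY.
have gen n1 n2 : B n1 -> B n2 -> psi n1 <= psi n2 -> psi n1 = psi n2.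
  move=> h1 h2 le12; apply: contrapT => ne.
  have lt : psi n1 < psi n2 by rewrite lt_neqAle le12 andbT; apply/eqP.
  have gap := int_gap (iB n1 h1) (iB n2 h2) lt.
  have : (psi @` B) (psi n1 + 2^-1).
    apply: (ci (psi n1) (psi n2)); [by exists n1 | by exists n2 |].
    apply/andP; split; first by rewrite lerDl invr_ge0 ler0n.
    apply: le_trans gap; rewrite lerD2l invf_le1 // ler1n //.
  case => nu hnu e; apply: (half_not_int (iB n1 h1)); rewrite -e; exact: iB.
have hl := BY _ Bl; have hm := BY _ Bm.
rewrite -(epsi _ hl) -(epsi _ hm).
by case/orP: (le_total (psi lam) (psi mu)) => h; [exact: gen | symmetry; exact: gen].
Qed.

Lemma cvg_H (T : Type) (F : set_system T) {FF : Filter F} (sf : T -> R) (h : T -> A -> R[i])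
  s0 (nu : A -> R[i]) (c : A -> R) a :
  complex.Re (nu a) != 1 -> sf @ F --> s0 -> (fun t => h t a) @ F --> nu a ->
  (fun t => ex ((1 - sf t) * gfun (h t a) + sf t * c a)) @ F -->
  ex ((1 - s0) * gfun (nu a) + s0 * c a).
Proof.
move=> hre hs hp; apply: cvg_ex; apply: cvgD.
  apply: cvgM; last exact: (cvg_gfun hre hp).
  by apply: cvgB; [exact: cvg_cst | exact: hs].
by apply: cvgMr_tmp.
Qed.
End Main.

Theorem proposition3p6 (R : realType) (V A : finType) (hd tl : A -> V) :
  (forall lam, YU1 R hd tl lam -> Zminus R hd tl (piH1 R hd tl (zeta R lam)))
  /\ (forall lam mu, YU1 R hd tl lam -> YU1 R hd tl mu ->
        (connected_component (YU1 R hd tl) lam mu <->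
         piH1 R hd tl (zeta R lam) = piH1 R hd tl (zeta R mu)))
  /\ (forall p, Zminus R hd tl p ->
        exists lam, YU1 R hd tl lam /\ piH1 R hd tl (zeta R lam) = p)
  /\ (forall lam, YU1 R hd tl lam ->
        contractible R (connected_component (YU1 R hd tl) lam)).
Proof.
split.
  move=> lam hl; split; last exact: hyp_H1Z (Y_hyp hl).
  by exists (zeta R lam); split => // a; exact: (Y_props hl a).2.2.
split.
  by move=> lam mu hl hm; split; [exact: eq_of_cc | exact: cc_of_eq].
split.
  move=> p [[x [hx ->]] hz]; exists (fun a => ex (x a)); split; last by rewrite zeta_ex.
  by apply: Y_of => //; exact: H1Z_hyp.
move=> lam hl.
set CC := connected_component (YU1 R hd tl) lam.
have charC mu : CC mu <-> YU1 R hd tl mu /\ piH1 R hd tl (zeta R mu) = piH1 R hd tl (zeta R lam).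
  split.
    by move=> h; split; [exact: connected_component_sub h | symmetry; exact: eq_of_cc h].
  by move=> [hm e]; apply: cc_of_eq => //; symmetry.
exists lam; split; first exact: connected_component_refl.
exists (fun p : R * {ptws A -> R[i]} => gam (zeta R p.2) (zeta R lam) p.1).
split.
- pose H' (p : R * {ptws A -> R[i]}) : {ptws A -> R[i]} :=
    fun a => ex ((1 - p.1) * gfun (p.2 a) + p.1 * zeta R lam a).
  have cH' : {within `[0%R, 1%R] `*` CC, continuous H'}.
    apply: continuous_in_subspaceT => p /set_mem [_ /charC [hm _]].
    rewrite /continuous_at; apply: (@ptws_cvg R A _ (nbhs p) _ H' (H' p)) => a.
    have hre : complex.Re (p.2 a) != 1 by apply: Re_ne1; exact: (Y_props hm a).1.
    have hp : (fun t : R * {ptws A -> R[i]} => t.2 a) @ nbhs p --> p.2 a.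
      exact: (@ptws_proj R A _ (nbhs p) _ snd p.2 a cvg_snd).
    rewrite /H'; apply: (@cvg_H R A _ _ _ fst snd p.1 p.2 (zeta R lam) a hre).
      exact: cvg_fst.
    exact: hp.
  apply: (subspace_eq_continuous _ cH').
  move=> p /set_mem [_ /charC [hm _]]; rewrite /from_subspace /H' /gam.
  by apply: funext => a; rewrite (zeta_gfun hm).
- move=> s mu hs /charC [hm e]; apply/charC.
  by have [h1 h2] := seg hm hl e hs; split => //; rewrite h2.
- move=> mu /charC [hm _] /=. exact: (gam0 (zeta R lam) hm).
- move=> mu _ /=. exact: (gam1 (zeta R mu) hl).
Qed.
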